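(* In the bandit setting, let $\beta=\frac1K$ and run Gaptron with gap map $a(\mathbf W_t,\mathbf x_t)=1-\max\{\mathbb 1[m_t^\star>\beta],\,m_t^\star\}$, exploration rate $\gamma=\min\Big\{1,\sqrt{\frac{K^3X^2D^2}{2(1-\beta)(K-1)T}}\Big\}$, learning rate $\eta=\frac{\gamma(1-\beta)}{K^2X^2}$, and the bandit multiclass hinge loss $$\ell_t(\mathbf W)=\begin{cases}\frac{\mathbb 1[y'_t=y_t]}{p'_t(y'_t)}\max\{1-m_t(\mathbf W,y_t),0\}&\text{if } m_t^\star\le\beta,\\ \frac{\mathbb 1[y'_t=y_t]}{p'_t(y'_t)}\max\{1-m_t(\mathbf W,y_t),0\}&\text{if } y_t^\star\ne y_t\text{ and } m_t^\star>\beta,\\ 0&\text{if } y'_t=y_t^\star=y_t\text{ and } m_t^\star>\beta.\end{cases}$$ Then for every $\mathbf U\in\mathcal W$, $$\mathbb E\Big[\sum_{t=1}^T\mathbb 1[y'_t\ne y_t]\Big]\le\mathbb E\Big[\sum_{t=1}^T\ell_t(\mathbf U)\Big]+\max\Big\{\frac{K^3X^2D^2}{K-1},\ 2KXD\sqrt{\frac T2}\Big\}.$$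
   Context: Setting and notation. Fix integers $K\ge 2$, $d\ge1$, $T\ge1$ and reals $X>0$, $D>0$. Matrices $\mathbf W\in\mathbb{R}^{K\times d}$ have rows $\mathbf W^1,\dots,\mathbf W^K\in\mathbb{R}^d$ and are identified with vectors in $\mathbb{R}^{Kd}$; $\langle\cdot,\cdot\rangle$ is the Euclidean inner product and $\|\cdot\|$ the Euclidean (Frobenius) norm. $\mathcal W=\{\mathbf W:\|\mathbf W\|\le D\}$. $\mathbf e_k$ is the $k$-th standard basis vector of $\mathbb R^K$ and $\mathbf 1\in\mathbb R^K$ the all-ones vector. In each round $t=1,\dots,T$ the environment chooses a label $y_t\in\{1,\dots,K\}$ and a feature vector $\mathbf x_t\in\mathbb R^d$ with $\|\mathbf x_t\|\le X$ (possibly depending on the learner's past predictions $y'_1,\dots,y'_{t-1}$ but not on its current random draw); the learner sees $\mathbf x_t$, outputs a random label $y'_t$, and then observes $y_t$ (full-information setting) or only $\mathbb 1[y'_t\ne y_t]$ (bandit setting). Gaptron, with learning rate $\eta>0$, exploration rate $\gamma\in[0,1]$, gap map $a:\mathbb R^{K\times d}\times\mathbb R^d\to[0,1]$ and loss functions $\ell_t$: set $\mathbf W_1=\mathbf 0$; for $t=1,\dots,T$: let $y_t^\star=\arg\max_k\langle \mathbf W_t^k,\mathbf x_t\rangle$ (ties broken arbitrarily), $a_t=a(\mathbf W_t,\mathbf x_t)$, $\mathbf p'_t=(1-\max\{a_t,\gamma\})\mathbf e_{y_t^\star}+\max\{a_t,\gamma\}\frac1K\mathbf 1$; draw $y'_t\sim\mathbf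 p'_t$ ($p'_t(k)$ denotes the probability of label $k$); set $\mathbf g_t=\nabla\ell_t(\mathbf W_t)$; update $\mathbf W_{t+1}=\arg\min_{\mathbf W\in\mathcal W}\ \eta\langle\mathbf g_t,\mathbf W\rangle+\frac12\|\mathbf W-\mathbf W_t\|^2$. $\mathbb E$ denotes expectation over the learner's randomization. Margins: $m_t(\mathbf W,y)=\langle\mathbf W^y,\mathbf x_t\rangle-\max_{k\ne y}\langle\mathbf W^k,\mathbf x_t\rangle$ and $m_t^\star=\max_k m_t(\mathbf W_t,k)$, where $\mathbf W_t$ is Gaptron's current iterate; in the definition of $\ell_t$ the case distinction uses $y_t^\star$ and $m_t^\star$ computed from $\mathbf W_t$. Where $\ell_t$ is nonzero and the hinge is active, $\mathbf g_t=\frac{\mathbb 1[y'_t=y_t]}{p'_t(y'_t)}(\mathbf e_{\tilde k}-\mathbf e_{y_t})\otimes\mathbf x_t$ with $\tilde k=\arg\max_{k\ne y_t}\langle\mathbf W_t^k,\mathbf x_t\rangle$, where $\mathbf v\otimes\mathbf x$ is the $K\times d$ matrix with rows $v_k\mathbf x$. *)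

(* Defs.v *)
From HB Require Import structures.
From mathcomp Require Import all_boot all_order all_algebra.
From mathcomp Require Import reals.
Set Implicit Arguments. Unset Strict Implicit. Unset Printing Implicit Defensive.
Import Order.TTheory GRing.Theory Num.Theory.
Local Open Scope ring_scope.

Section Gaptron.
Variables (R : realType) (K d : nat).

Definition fmaxs (s : seq R) : R := foldr Num.max (head 0 s) s.

Definition score (W : 'M[R]_(K, d)) (x : 'rV[R]_d) (k : 'I_K) : R :=
  \sum_(j < d) W k j * x 0 j.

Definition margin (W : 'M[R]_(K, d)) (x : 'rV[R]_d) (y : 'I_K) : R :=
  score W x y - fmaxs [seq score W x k | k <- [seq k <- enum 'I_K | k != y]].

Definition mstar (W : 'M[R]_(K, d)) (x : 'rV[R]_d) : R :=
  fmaxs [seq margin W x k | k <- enum 'I_K].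

Definition frob_dot (A B : 'M[R]_(K, d)) : R := \sum_(i < K) \sum_(j < d) A i j * B i j.
Definition frob_norm (A : 'M[R]_(K, d)) : R := Num.sqrt (frob_dot A A).
Definition vnorm (x : 'rV[R]_d) : R := Num.sqrt (\sum_(j < d) x 0 j ^+ 2).

(* Tie-breaking rules for y^* = argmax_k <W^k,x> and ktilde = argmax_{k<>y} <W^k,x>;
   they may depend on the history of past predictions. *)
Definition ystar_ok (ysel : seq 'I_K -> 'M[R]_(K, d) -> 'rV[R]_d -> 'I_K) :=
  forall h W x k, score W x k <= score W x (ysel h W x).
Definition ktilde_ok (ksel : seq 'I_K -> 'M[R]_(K, d) -> 'rV[R]_d -> 'I_K -> 'I_K) :=
  forall h W x y, ksel h W x y != y /\
    forall k, k != y -> score W x k <= score W x (ksel h W x y).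

(* upd Wt g = argmin_{||W||<=D} eta <g, W> + 1/2 ||W - Wt||^2 *)
Definition upd_ok (eta D : R) (upd : 'M[R]_(K, d) -> 'M[R]_(K, d) -> 'M[R]_(K, d)) :=
  forall Wt g, frob_norm (upd Wt g) <= D /\
    forall V, frob_norm V <= D ->
      eta * frob_dot g (upd Wt g) + 2^-1 * frob_norm (upd Wt g - Wt) ^+ 2
      <= eta * frob_dot g V + 2^-1 * frob_norm (V - Wt) ^+ 2.

Variables (beta gamma : R).
Variable env : seq 'I_K -> 'I_K * 'rV[R]_d.  (* history of past predictions -> (y_t, x_t) *)
Variable ysel : seq 'I_K -> 'M[R]_(K, d) -> 'rV[R]_d -> 'I_K.
Variable ksel : seq 'I_K -> 'M[R]_(K, d) -> 'rV[R]_d -> 'I_K -> 'I_K.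
Variable upd : 'M[R]_(K, d) -> 'M[R]_(K, d) -> 'M[R]_(K, d).

Definition gap (W : 'M[R]_(K, d)) (x : 'rV[R]_d) : R :=
  1 - Num.max (if beta < mstar W x then 1 else 0) (mstar W x).

Definition prob (h : seq 'I_K) (W : 'M[R]_(K, d)) (x : 'rV[R]_d) (k : 'I_K) : R :=
  (1 - Num.max (gap W x) gamma) * (k == ysel h W x)%:R
  + Num.max (gap W x) gamma / K%:R.

Definition case3 (h : seq 'I_K) (Wt : 'M[R]_(K, d)) (x : 'rV[R]_d) (y y' : 'I_K) : bool :=
  [&& beta < mstar Wt x, y' == ysel h Wt x & ysel h Wt x == y].

Definition iw (h : seq 'I_K) (Wt : 'M[R]_(K, d)) (x : 'rV[R]_d) (y y' : 'I_K) : R :=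
  (y' == y)%:R / prob h Wt x y'.

Definition loss (h : seq 'I_K) (Wt : 'M[R]_(K, d)) (x : 'rV[R]_d) (y y' : 'I_K)
  (U : 'M[R]_(K, d)) : R :=
  if case3 h Wt x y y' then 0
  else iw h Wt x y y' * Num.max (1 - margin U x y) 0.

Definition grad (h : seq 'I_K) (Wt : 'M[R]_(K, d)) (x : 'rV[R]_d) (y y' : 'I_K)
  : 'M[R]_(K, d) :=
  if case3 h Wt x y y' then 0
  else if 0 < 1 - margin Wt x y then
    iw h Wt x y y' *:
      \matrix_(i < K, j < d) (((i == ksel h Wt x y)%:R - (i == y)%:R) * x 0 j)
  else 0.

(* W after processing the reversed history hr *)
Fixpoint Wrec (hr : seq 'I_K) : 'M[R]_(K, d) :=
  match hr with
  | [::] => 0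
  | y' :: hr' =>
      let h := rev hr' in
      upd (Wrec hr') (grad h (Wrec hr') (env h).2 (env h).1 y')
  end.

(* W_t, given the history h = [:: y'_1; ...; y'_{t-1}] *)
Definition Wof (h : seq 'I_K) : 'M[R]_(K, d) := Wrec (rev h).

Variable T : nat.

Definition traj_prob (s : T.-tuple 'I_K) : R :=
  \prod_(t < T) prob (take t s) (Wof (take t s)) (env (take t s)).2 (tnth s t).

Definition expect (F : T.-tuple 'I_K -> R) : R :=
  \sum_(s : T.-tuple 'I_K) traj_prob s * F s.

Definition mistakes (s : T.-tuple 'I_K) : R :=
  \sum_(t < T) (tnth s t != (env (take t s)).1)%:R.

Definition cumloss (U : 'M[R]_(K, d)) (s : T.-tuple 'I_K) : R :=
  \sum_(t < T) loss (take t s) (Wof (take t s)) (env (take t s)).2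
                    (env (take t s)).1 (tnth s t) U.

End Gaptron.

Definition betaK (R : realType) (K : nat) : R := K%:R^-1.
Definition gammaT (R : realType) (K T : nat) (X D : R) : R :=
  Num.min 1 (Num.sqrt ((K%:R ^+ 3 * X ^+ 2 * D ^+ 2) /
                       (2 * (1 - betaK R K) * (K%:R - 1) * T%:R))).
Definition etaT (R : realType) (K T : nat) (X D : R) : R :=
  gammaT K T X D * (1 - betaK R K) / (K%:R ^+ 2 * X ^+ 2).

(* Main.v *)
Require Import Defs.
From HB Require Import structures.
From mathcomp Require Import all_boot all_order all_algebra.
From mathcomp Require Import reals.
From mathcomp Require Import ring lra.
Import Order.TTheory GRing.Theory Num.Theory.
Local Open Scope ring_scope.
Set Implicit Arguments. Unset Strict Implicit.

Section Tup.
Variables (R : realType) (K : nat).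

Definition tsplit n (u : n.+1.-tuple 'I_K) : n.-tuple 'I_K * 'I_K :=
  ([tuple tnth u (widen_ord (leqnSn n) i) | i < n], tnth u ord_max).

Lemma sum_tuple_rcons n (F : n.+1.-tuple 'I_K -> R) :
  \sum_(u : n.+1.-tuple 'I_K) F u =
  \sum_(s : n.-tuple 'I_K) \sum_(y : 'I_K) F (rcons_tuple s y).
Proof.
rewrite pair_big /=.
rewrite (reindex (fun p : n.-tuple 'I_K * 'I_K => rcons_tuple p.1 p.2)).
  by apply: eq_bigl.
exists (@tsplit n).
  move=> [s y] _; rewrite /tsplit; congr pair.
    apply: eq_from_tnth => i; rewrite tnth_mktuple !(tnth_nth y) nth_rcons.
    by rewrite /= size_tuple ltn_ord.
  by rewrite (tnth_nth y) /= nth_rcons size_tuple ltnn eqxx.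
move=> u _; apply: eq_from_tnth => i; rewrite /tsplit.
have z := tnth u ord_max.
rewrite (tnth_nth z) [in RHS](tnth_nth z) /= nth_rcons size_tuple.
case: ltnP => [lt|ge].
  rewrite card_ord in lt.
  rewrite (nth_map (Ordinal lt)) ?size_enum_ord // (tnth_nth z).
  by congr (nth _ _ _); rewrite /= nth_enum_ord.
rewrite card_ord in ge *.
have ei : nat_of_ord i = n by apply/eqP; rewrite eqn_leq ge -ltnS ltn_ord.
by rewrite ei eqxx (tnth_nth z).
Qed.

Lemma take_rcons_tuple n (s : n.-tuple 'I_K) y (t : 'I_n) :
  take (widen_ord (leqnSn n) t) (rcons_tuple s y) = take t s.
Proof.
by rewrite /= -cats1 takel_cat // size_tuple ltnW.
Qed.

Lemma take_rcons_tuple_max n (s : n.-tuple 'I_K) y :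
  take (@ord_max n) (rcons_tuple s y) = s.
Proof.
have hs : size s = n := size_tuple s.
by rewrite /= -cats1 takel_cat ?hs // -{1}hs take_size.
Qed.

Lemma tnth_rcons_tuple n (s : n.-tuple 'I_K) y (t : 'I_n) :
  tnth (rcons_tuple s y) (widen_ord (leqnSn n) t) = tnth s t.
Proof. by rewrite !(tnth_nth y) /= nth_rcons size_tuple ltn_ord. Qed.

Lemma tnth_rcons_tuple_max n (s : n.-tuple 'I_K) y :
  tnth (rcons_tuple s y) ord_max = y.
Proof. by rewrite (tnth_nth y) /= nth_rcons size_tuple ltnn eqxx. Qed.

End Tup.

Section Exp.
Variables (R : realType) (K d : nat) (beta gamma : R).
Variable env : seq 'I_K -> 'I_K * 'rV[R]_d.
Variable ysel : seq 'I_K -> 'M[R]_(K, d) -> 'rV[R]_d -> 'I_K.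
Variable ksel : seq 'I_K -> 'M[R]_(K, d) -> 'rV[R]_d -> 'I_K -> 'I_K.
Variable upd : 'M[R]_(K, d) -> 'M[R]_(K, d) -> 'M[R]_(K, d).
Hypothesis K0 : (0 < K)%N.
Hypothesis g0 : 0 <= gamma.
Hypothesis g1 : gamma <= 1.

Definition pr h y := prob beta gamma ysel h (Wof beta gamma env ysel ksel upd h) (env h).2 y.
Definition TP n (s : n.-tuple 'I_K) := traj_prob beta gamma env ysel ksel upd s.

Lemma prob_ge0 h W x k : 0 <= prob beta gamma ysel h W x k.
Proof.
rewrite /prob.
have hg : gap beta W x <= 1.
  rewrite /gap lerBlDr lerDl; case: ifP => _; rewrite le_max ?ler01 ?lexx //.
set G := Num.max _ _.
have G1 : G <= 1 by rewrite ge_max hg g1.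
have G0 : 0 <= G by rewrite le_max g0 orbT.
have K1 : 0 < K%:R :> R by rewrite ltr0n.
apply: addr_ge0; first by apply: mulr_ge0; rewrite ?subr_ge0 // ler0n.
by apply: divr_ge0 => //; rewrite ler0n.
Qed.

Lemma prob_sum h W x : \sum_k prob beta gamma ysel h W x k = 1.
Proof.
rewrite /prob big_split /= -mulr_sumr sumr_const card_ord.
rewrite (bigD1 (ysel h W x)) //= eqxx big1 ?addr0; last first.
  by move=> i /negbTE ->.
have K1 : K%:R != 0 :> R by rewrite pnatr_eq0 -lt0n.
rewrite mulr1 -[_ *+ K]mulr_natr divfK //; lra.
Qed.

Lemma TP_rcons n (s : n.-tuple 'I_K) y :
  TP (rcons_tuple s y) = TP s * pr s y.
Proof.
rewrite /TP /traj_prob big_ord_recr /=; congr (_ * _).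
  by apply: eq_bigr => t _; rewrite take_rcons_tuple tnth_rcons_tuple.
by rewrite take_rcons_tuple_max tnth_rcons_tuple_max.
Qed.

Lemma TP_ge0 n (s : n.-tuple 'I_K) : 0 <= TP s.
Proof. by apply: prodr_ge0 => t _; apply: prob_ge0. Qed.

Lemma TP_sum n : \sum_(s : n.-tuple 'I_K) TP s = 1.
Proof.
elim: n => [|n IH].
  rewrite (eq_bigr (fun _ => 1)); last by move=> s _; rewrite /TP /traj_prob big_ord0.
  by rewrite sumr_const card_tuple expn0.
rewrite sum_tuple_rcons -{}IH; apply: eq_bigr => s _.
by under eq_bigr do rewrite TP_rcons; rewrite -mulr_sumr prob_sum mulr1.
Qed.

Definition Sf (f : seq 'I_K -> 'I_K -> R) n (s : n.-tuple 'I_K) :=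
  \sum_(t < n) f (take t s) (tnth s t).

Lemma Sf_rcons f n (s : n.-tuple 'I_K) y :
  Sf f (rcons_tuple s y) = Sf f s + f s y.
Proof.
rewrite /Sf big_ord_recr /=; congr (_ + _).
  by apply: eq_bigr => t _; rewrite take_rcons_tuple tnth_rcons_tuple.
by rewrite take_rcons_tuple_max tnth_rcons_tuple_max.
Qed.

Lemma Sf_bound f c n :
  (forall h, \sum_y pr h y * f h y <= c) ->
  \sum_(s : n.-tuple 'I_K) TP s * Sf f s <= n%:R * c.
Proof.
move=> hc; elim: n => [|n IH].
  by rewrite big1 ?mul0r // => s _; rewrite /Sf big_ord0 mulr0.
rewrite sum_tuple_rcons.
rewrite (eq_bigr (fun s : n.-tuple 'I_K => TP s * Sf f s + TP s * \sum_y pr s y * f s y)); last first.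
  move=> s _; under eq_bigr do rewrite TP_rcons Sf_rcons -mulrA mulrDr.
  rewrite -mulr_sumr big_split /= -mulr_suml.
  have -> : \sum_y pr s y = 1 by apply: prob_sum.
  by rewrite mul1r mulrDr.
rewrite big_split /= mulrSr mulrDl.
apply: lerD; first exact: IH.
rewrite -(TP_sum n) mulr_suml.
by apply: ler_sum => s _; apply: ler_wpM2l; [exact: TP_ge0 | exact: hc].
Qed.
End Exp.


Section Dot.
Variables (R : realType) (K d : nat).
Notation M := 'M[R]_(K, d).
Notation dot := (@frob_dot R K d).

Lemma dotC (a b : M) : dot a b = dot b a.
Proof. by apply: eq_bigr => i _; apply: eq_bigr => j _; rewrite mulrC. Qed.

Lemma dotDl (a b c : M) : dot (a + b) c = dot a c + dot b c.
Proof.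
rewrite /frob_dot -big_split; apply: eq_bigr => i _.
by rewrite -big_split; apply: eq_bigr => j _; rewrite !mxE mulrDl.
Qed.

Lemma dotZl l (a b : M) : dot (l *: a) b = l * dot a b.
Proof.
rewrite /frob_dot mulr_sumr; apply: eq_bigr => i _.
by rewrite mulr_sumr; apply: eq_bigr => j _; rewrite !mxE mulrA.
Qed.

Lemma dotNl (a b : M) : dot (- a) b = - dot a b.
Proof. by rewrite -scaleN1r dotZl mulN1r. Qed.

Lemma dotNr (a b : M) : dot b (- a) = - dot b a.
Proof. by rewrite dotC dotNl dotC. Qed.

Lemma dotBl (a b c : M) : dot (a - b) c = dot a c - dot b c.
Proof. by rewrite dotDl dotNl. Qed.

Lemma dotDr (a b c : M) : dot c (a + b) = dot c a + dot c b.
Proof. by rewrite dotC dotDl !(dotC c). Qed.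

Lemma dotBr (a b c : M) : dot c (a - b) = dot c a - dot c b.
Proof. by rewrite dotC dotBl !(dotC c). Qed.

Lemma dotZr l (a b : M) : dot b (l *: a) = l * dot b a.
Proof. by rewrite dotC dotZl dotC. Qed.

Lemma dot0l (b : M) : dot 0 b = 0.
Proof. by rewrite -(scale0r 0) dotZl mul0r. Qed.

Lemma dot0r (b : M) : dot b 0 = 0.
Proof. by rewrite dotC dot0l. Qed.

Lemma dot_ge0 (a : M) : 0 <= dot a a.
Proof. by apply: sumr_ge0 => i _; apply: sumr_ge0 => j _; rewrite -expr2 sqr_ge0. Qed.

Lemma frob_sq (a : M) : frob_norm a ^+ 2 = dot a a.
Proof. by rewrite /frob_norm sqr_sqrtr // dot_ge0. Qed.

Lemma frob_le (a : M) D : 0 <= D -> (frob_norm a <= D) = (dot a a <= D ^+ 2).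
Proof.
move=> D0; rewrite /frob_norm -{1}(ger0_norm D0) -sqrtr_sqr ler_sqrt //.
by rewrite exprn_ge0.
Qed.

Lemma ogd_step eta D upd (W g U : M) :
  0 < eta -> 0 <= D -> upd_ok eta D upd -> dot U U <= D ^+ 2 ->
  dot g (W - U) <=
    (dot (W - U) (W - U) - dot (upd W g - U) (upd W g - U)) / (2 * eta)
    + eta / 2 * dot g g.
Proof.
move=> e0 D0 /(_ W g) [hW hmin] hU.
set W' := upd W g in hW hmin *.
set a := W' - W; set b := U - W'.
have eW' : W' = W + a by rewrite /a addrC subrK.
have eU : U = W' + b by rewrite /b addrC subrK.
have hW2 : dot W' W' <= D ^+ 2 by rewrite -frob_le.
clearbody a b W'.
have hbb : 0 <= dot b b by apply: dot_ge0.
have hU2 : dot (W' + b) (W' + b) <= D ^+ 2 by rewrite -eU.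
rewrite !(dotDl, dotDr) (dotC b W') in hU2.
(* variational inequality *)
have A0 : 0 <= eta * dot g b + dot a b.
  rewrite leNgt; apply/negP => An.
  set A := eta * dot g b + dot a b in An.
  set B := dot b b in hbb.
  have hl : forall l, 0 < l -> l <= 1 -> 0 <= A + l * B / 2.
    move=> l l0 l1.
    have hV : frob_norm (W' + l *: b) <= D.
      rewrite frob_le // !(dotDl, dotDr, dotZl, dotZr) (dotC b W').
      have hl2 : 0 <= l * (1 - l) by apply: mulr_ge0; lra.
      have h3 := mulr_ge0 hl2 hbb.
      have h4 : l * (dot W' W' + dot W' b + (dot W' b + dot b b)) <= l * D ^+ 2.
        by rewrite ler_wpM2l // ltW.
      have h5 : (1 - l) * dot W' W' <= (1 - l) * D ^+ 2.
        by rewrite ler_wpM2l // subr_ge0.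
      rewrite /B in h3; lra.
    have := hmin _ hV.
    have -> : W' + l *: b - W = a + l *: b by rewrite eW' (addrC W a) -!addrA; congr (_ + _); rewrite addrC subrK.
    have eA : W' - W = a by rewrite eW' addrC addKr.
    rewrite eA !frob_sq !(dotDl, dotDr, dotZl, dotZr) (dotC b a) => h.
    have : 0 <= l * (A + l * B / 2) by rewrite /A /B; nra.
    by rewrite pmulr_rge0.
  case: (leP B (- A)) => hB.
    have := hl 1 ltr01 (lexx _); lra.
  have Bp : 0 < B by lra.
  have := hl (- A / B); rewrite divr_gt0 ?oppr_gt0 // ler_pdivrMr // mul1r.
  move=> /(_ erefl (ltW hB)); rewrite divfK ?gt_eqF //.
  lra.
have eWU : W - U = - (a + b) by rewrite eU eW' !opprD !addrA subrr add0r.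
have eW'U : W' - U = - b by rewrite eU opprD addrA subrr add0r.
rewrite eWU eW'U !(dotNl, dotDl, dotDr, dotNr) (dotC b a).
have hc : 0 <= dot (a + eta *: g) (a + eta *: g) by apply: dot_ge0.
move: hc; rewrite !(dotDl, dotDr, dotZl, dotZr) (dotC g a) => hc.
have -> : eta / 2 * dot g g = (eta * eta * dot g g) / (2 * eta).
  by field; rewrite gt_eqF.
rewrite -mulrDl ler_pdivlMr ?mulr_gt0 //.
nra.
Qed.

End Dot.


Section Marg.
Variables (R : realType) (K d : nat).
Notation M := 'M[R]_(K, d).

Lemma foldr_max_ge (c : R) s : c <= foldr Num.max c s /\ forall z, z \in s -> z <= foldr Num.max c s.
Proof.
elim: s => [|a s [IH1 IH2]] /=; first by split=> // z.
split; first by rewrite le_max IH1 orbT.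
move=> z; rewrite inE => /orP [/eqP ->|zs]; first by rewrite le_max lexx.
by rewrite le_max IH2 ?orbT.
Qed.

Lemma foldr_max_mem (c : R) s : foldr Num.max c s \in c :: s.
Proof.
elim: s => [|a s IH] /=; first by rewrite inE eqxx.
rewrite maxEle; case: ifP => _; last by rewrite !inE eqxx orbT.
move: IH; rewrite !inE => /orP [->|->] //; by rewrite ?orbT.
Qed.

Lemma fmaxs_ub (s : seq R) z : z \in s -> z <= fmaxs s.
Proof. by move=> zs; have [_ ->] := foldr_max_ge (head 0 s) s. Qed.

Lemma fmaxs_mem (s : seq R) z : z \in s -> fmaxs s \in s.
Proof.
case: s => [//|a s] _; have := foldr_max_mem a (a :: s).
by rewrite /fmaxs /= inE => /orP [/eqP ->|]; rewrite ?inE ?eqxx.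
Qed.

Variable ysel : seq 'I_K -> M -> 'rV[R]_d -> 'I_K.
Variable ksel : seq 'I_K -> M -> 'rV[R]_d -> 'I_K -> 'I_K.
Hypothesis hys : ystar_ok ysel.
Hypothesis hks : ktilde_ok ksel.

Lemma margin_le (U : M) x y k : k != y -> margin U x y <= score U x y - score U x k.
Proof.
move=> ky; rewrite /margin lerB // fmaxs_ub //.
by apply: map_f; rewrite mem_filter ky mem_enum.
Qed.

Lemma margin_ksel (h : seq 'I_K) (W : M) x y : margin W x y = score W x y - score W x (ksel h W x y).
Proof.
have [kn kmax] := hks h W x y.
apply/eqP; rewrite eq_le; apply/andP; split; first exact: margin_le.
rewrite /margin lerB //.
have hm : score W x (ksel h W x y) \in [seq score W x k | k <- [seq k <- enum 'I_K | k != y]].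
  by apply: map_f; rewrite mem_filter kn mem_enum.
have /mapP [k] := fmaxs_mem hm.
by rewrite mem_filter => /andP [ky _] ->; apply: kmax.
Qed.

Lemma mstar_ge (W : M) x k : margin W x k <= mstar W x.
Proof. by apply: fmaxs_ub; apply: map_f; rewrite mem_enum. Qed.

Lemma mstar_ex (W : M) x (k0 : 'I_K) : exists k, mstar W x = margin W x k.
Proof.
have hm : margin W x k0 \in [seq margin W x k | k <- enum 'I_K] by apply: map_f; rewrite mem_enum.
by have /mapP [k _ ek] := fmaxs_mem hm; exists k; rewrite /mstar ek.
Qed.

Lemma mstar_ge0 (h : seq 'I_K) (W : M) x : 0 <= mstar W x.
Proof.
apply: le_trans (mstar_ge W x (ysel h W x)).
by rewrite (margin_ksel h) subr_ge0 hys.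
Qed.

Lemma margin_neq (h : seq 'I_K) (W : M) x y : y != ysel h W x -> margin W x y <= - mstar W x.
Proof.
move=> yn; have [k ->] := mstar_ex W x y.
rewrite (margin_ksel h W x k) (margin_ksel h W x y).
have ny : ysel h W x != y by rewrite eq_sym.
have h1 := (hks h W x y).2 _ ny.
have hy := hys h W x y.
case: (eqVneq k (ysel h W x)) => [->|kn].
  have := (hks h W x (ysel h W x)).2 y yn; lra.
have kn' : ysel h W x != k by rewrite eq_sym.
have := (hks h W x k).2 _ kn'; have := hys h W x k; lra.
Qed.

End Marg.


Section Grad.
Variables (R : realType) (K d : nat).
Notation M := 'M[R]_(K, d).

Definition Gm (k y : 'I_K) (x : 'rV[R]_d) : M :=
  \matrix_(i < K, j < d) (((i == k)%:R - (i == y)%:R) * x 0 j).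

Lemma sum_ind (k : 'I_K) (F : 'I_K -> R) : \sum_i (i == k)%:R * F i = F k.
Proof.
rewrite (bigD1 k) //= eqxx mul1r big1 ?addr0 // => i /negbTE ->; by rewrite mul0r.
Qed.

Lemma dot_Gm k y x (U : M) : frob_dot (Gm k y x) U = score U x k - score U x y.
Proof.
rewrite /frob_dot /score.
rewrite (eq_bigr (fun i => ((i == k)%:R - (i == y)%:R) * \sum_j U i j * x 0 j)); last first.
  move=> i _; rewrite mulr_sumr; apply: eq_bigr => j _; rewrite mxE; ring.
under eq_bigr do rewrite mulrBl.
by rewrite sumrB !sum_ind.
Qed.

Lemma dot_GmGm k y x : k != y -> frob_dot (Gm k y x) (Gm k y x) = 2 * \sum_j x 0 j ^+ 2.
Proof.
move=> ky; rewrite dot_Gm /score.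
rewrite -sumrB mulr_sumr; apply: eq_bigr => j _; rewrite !mxE eqxx (negbTE ky) eq_sym (negbTE ky).
rewrite eqxx /=; ring.
Qed.

Lemma scoreB (U W : M) x k : score (U - W) x k = score U x k - score W x k.
Proof. by rewrite /score -sumrB; apply: eq_bigr => j _; rewrite !mxE mulrBl. Qed.

Variables (beta gamma : R).
Variable ysel : seq 'I_K -> M -> 'rV[R]_d -> 'I_K.
Variable ksel : seq 'I_K -> M -> 'rV[R]_d -> 'I_K -> 'I_K.
Hypothesis hks : ktilde_ok ksel.
Hypothesis K0 : (0 < K)%N.
Hypothesis g0 : 0 <= gamma.
Hypothesis g1 : gamma <= 1.

Lemma iw_ge0 h (W : M) x y y' : 0 <= iw beta gamma ysel h W x y y'.
Proof. by rewrite /iw divr_ge0 ?ler0n // prob_ge0. Qed.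

Lemma grad_eq h (W : M) x y y' :
  grad beta gamma ysel ksel h W x y y' =
  if case3 beta ysel h W x y y' then 0
  else if 0 < 1 - margin W x y then iw beta gamma ysel h W x y y' *: Gm (ksel h W x y) y x
  else 0.
Proof. by []. Qed.

Lemma loss_sub h (W : M) x y y' (U : M) :
  loss beta gamma ysel h W x y y' W + frob_dot (grad beta gamma ysel ksel h W x y y') (U - W)
  <= loss beta gamma ysel h W x y y' U.
Proof.
rewrite grad_eq /loss; case: ifP => _; first by rewrite dot0l addr0.
have hiw := iw_ge0 h W x y y'.
set w := iw _ _ _ _ _ _ _ _.
have hU : 1 - margin U x y <= Num.max (1 - margin U x y) 0 by rewrite le_max lexx.
case: ifP => hp.
  rewrite dotZl dot_Gm max_l; last by apply: ltW.
  rewrite (margin_ksel hks h W x y).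
  have [kn _] := hks h W x y.
  have hm := margin_le U x kn.
  rewrite !scoreB -mulrDr; apply: ler_wpM2l => //; lra.
rewrite dot0l addr0 max_r; last by rewrite leNgt hp.
by rewrite mulr0 mulr_ge0 // le_max lexx orbT.
Qed.
End Grad.


Section Round.
Variables (R : realType) (K d : nat) (X gamma : R).
Notation M := 'M[R]_(K, d).
Hypothesis K2 : (2 <= K)%N.
Hypothesis X0 : 0 < X.
Hypothesis g0 : 0 < gamma.
Hypothesis g1 : gamma <= 1.
Variable ysel : seq 'I_K -> M -> 'rV[R]_d -> 'I_K.
Variable ksel : seq 'I_K -> M -> 'rV[R]_d -> 'I_K -> 'I_K.
Hypothesis hys : ystar_ok ysel.
Hypothesis hks : ktilde_ok ksel.

Let beta := betaK R K.
Let eta := gamma * (1 - beta) / (K%:R ^+ 2 * X ^+ 2).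

Definition Zf h (W : M) x y y' :=
  (y' != y)%:R - loss beta gamma ysel h W x y y' W
  + eta / 2 * frob_dot (grad beta gamma ysel ksel h W x y y') (grad beta gamma ysel ksel h W x y y').

Lemma K0 : (0 < K)%N. Proof. by apply: leq_trans K2. Qed.

Lemma round h (W : M) x y : vnorm x <= X ->
  \sum_y' prob beta gamma ysel h W x y' * Zf h W x y y' <= gamma * (1 - beta).
Proof.
move=> hx.
have gg0 : 0 <= gamma by apply: ltW.
set p := prob beta gamma ysel h W x y.
have hsum := prob_sum beta gamma ysel K0 h W x.
rewrite (bigD1 y) //= in hsum.
rewrite (bigD1 y) //=.
have -> : \sum_(y' < K | y' != y) prob beta gamma ysel h W x y' * Zf h W x y y' =
          \sum_(y' < K | y' != y) prob beta gamma ysel h W x y'.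
  apply: eq_bigr => y' ny; rewrite /Zf.
  have hl : loss beta gamma ysel h W x y y' W = 0.
    by rewrite /loss /iw (negbTE ny) mul0r mul0r; case: ifP.
  have hg : grad beta gamma ysel ksel h W x y y' = 0.
    by rewrite grad_eq /iw (negbTE ny) mul0r scale0r; case: ifP => //; case: ifP.
  by rewrite hl hg dot0l ny mulr0 subr0 addr0 mulr1.
have hS : \sum_(y' < K | y' != y) prob beta gamma ysel h W x y' = 1 - p by rewrite /p; lra.
rewrite hS /Zf eqxx /=.
have k2 : 2 <= K%:R :> R by rewrite (ler_nat R 2 K).
have kn0 : K%:R != 0 :> R by rewrite gt_eqF // (lt_le_trans _ k2).
have eb : beta = K%:R^-1 by [].
set m := mstar W x.
have m0 : 0 <= m := mstar_ge0 hys hks h W x.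
set G := Num.max (gap beta W x) gamma.
have ep : p = (1 - G) * (y == ysel h W x)%:R + G / K%:R by [].
have G1 : G <= 1.
  rewrite ge_max g1 andbT /gap lerBlDr lerDl le_max; case: ifP => _; by rewrite ?ler01 ?lexx ?m0 ?orbT.
have Gg : gamma <= G by rewrite le_max lexx orbT.
case: (boolP (case3 beta ysel h W x y y)) => c3.
  rewrite grad_eq /loss c3 dot0l mulr0 subrr addr0 mulr0.
  move: c3; rewrite /case3 => /and3P [bm /eqP ey _].
  have hgap : gap beta W x <= 0.
    by rewrite /gap bm subr_le0 le_max lexx.
  have eG : G = gamma by rewrite /G max_r // (le_trans hgap).
  rewrite ep eG ey eqxx eb le_eqVlt; apply/orP; left; apply/eqP.
  by rewrite mulr1 add0r; field.
rewrite -/p.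
set u := K%:R^-1 in eb ep *.
have hu0 : 0 < u by rewrite invr_gt0 (lt_le_trans _ k2).
have hKu : K%:R * u = 1 by rewrite /u divff.
have hu1 : 2 * u <= 1.
  by have := ler_wpM2r (ltW hu0) k2; rewrite hKu.
set S := \sum_j x 0 j ^+ 2.
have S0 : 0 <= S by apply: sumr_ge0 => j _; apply: sqr_ge0.
have SX : S <= X ^+ 2.
  have hv : 0 <= vnorm x by apply: sqrtr_ge0.
  have : vnorm x ^+ 2 = S by rewrite /vnorm sqr_sqrtr.
  move=> <-; nra.
have eeta : eta = gamma * (1 - u) * u ^+ 2 / X ^+ 2.
  rewrite /eta eb /u; field; rewrite kn0 /= gt_eqF //.
have hE : eta * S <= gamma * (1 - u) * u ^+ 2.
  have c0 : 0 <= gamma * (1 - u) * u ^+ 2.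
    by apply: mulr_ge0; [apply: mulr_ge0; lra | apply: sqr_ge0].
  rewrite eeta mulrAC ler_pdivrMr ?exprn_gt0 //; exact: (ler_wpM2l c0 SX).
set mW := margin W x y.
have [kn _] := hks h W x y.
have hp0 : 0 < p.
  have a1 : 0 <= (1 - G) * (y == ysel h W x)%:R by apply: mulr_ge0; [lra | apply: ler0n].
  have a2 : 0 < G * u by apply: mulr_gt0 => //; apply: lt_le_trans Gg.
  rewrite ep; lra.
have hmw : mW <= m /\ (y != ysel h W x -> mW <= - m).
  by split; [apply: mstar_ge | apply: margin_neq].
have ebm : ~~ ((beta < m) && (y == ysel h W x)).
  by move: c3; rewrite /case3; case: (y =P ysel h W x) => [->|]; rewrite ?eqxx ?andbT ?andbF.
have hpos : 0 < 1 - mW.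
  case: (boolP (y == ysel h W x)) => hy.
    move: ebm; rewrite hy andbT -leNgt => mb.
    move: hmw => [h1 _]; rewrite eb in mb; lra.
  move: hmw => [_ /(_ hy) h2]; lra.
rewrite /loss (negbTE c3) grad_eq (negbTE c3) hpos dotZl dotZr dot_GmGm //.
rewrite /iw eqxx -/p -/mW -/S.
rewrite max_l; last by apply: ltW.
have -> : p * (0 - 1%:R / p * (1 - mW) + eta / 2 * (1%:R / p * (1%:R / p * (2 * S)))) + (1 - p)
        = - (1 - mW) + eta * S / p + 1 - p.
  by field; rewrite gt_eqF.
rewrite eb; rewrite eb in ebm.
set q := eta * S / p.
have hq : forall c, eta * S <= c * p -> q <= c by move=> c hc; rewrite /q ler_pdivrMr.
have u2 : 0 <= u ^+ 2 by apply: sqr_ge0.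
have gu : 0 <= gamma * u by apply: mulr_ge0 => //; apply: ltW.
case: (boolP (u < m)) => hb.
  have hy : y != ysel h W x by move: ebm; rewrite hb.
  have hgap : gap beta W x <= 0 by rewrite /gap eb hb subr_le0 le_max lexx.
  have eG : G = gamma by rewrite /G max_r // (le_trans hgap).
  have ep' : p = gamma * u by rewrite ep (negbTE hy) eG mulr0 add0r.
  have hq1 : q <= (1 - u) * u.
    apply: hq; rewrite ep'.
    have -> : (1 - u) * u * (gamma * u) = gamma * (1 - u) * u ^+ 2 by ring.
    exact: hE.
  have h2 := hmw.2 hy.
  have e1 : (1 - u) * u = u - u ^+ 2 by ring.
  rewrite e1 in hq1.
  rewrite ep'; lra.
rewrite -leNgt in hb.
have egap : gap beta W x = 1 - m.
  by rewrite /gap eb ltNge hb /= max_r.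
have eG : G = Num.max (1 - m) gamma by rewrite /G egap.
have hGm : 1 - m <= G by rewrite eG le_max lexx.
have hmw1 := hmw.1.
case: (boolP (y == ysel h W x)) => hy.
  have ep' : p = 1 - G + G * u by rewrite ep hy mulr1.
  have pu : u <= p.
    have : 0 <= (1 - G) * (1 - u) by apply: mulr_ge0; lra.
    rewrite ep'; nra.
  have hq1 : q <= gamma * (1 - u) * u.
    apply: hq; apply: (le_trans hE).
    have -> : gamma * (1 - u) * u ^+ 2 = gamma * (1 - u) * u * u by rewrite expr2 mulrA.
    have c1 : 0 <= gamma * (1 - u) * u.
      by apply: mulr_ge0; [apply: mulr_ge0; lra | exact: ltW hu0].
    have pu' : 0 <= p - u by rewrite subr_ge0.
    have := mulr_ge0 c1 pu'. nra.
  have gu1 : gamma * (1 - u) * u <= gamma * (1 - u).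
    rewrite -[X in _ <= X]mulr1; apply: ler_wpM2l; [apply: mulr_ge0; lra | lra].
  have gu2 : gamma * (1 - u) * u <= u.
    rewrite -[X in _ <= X]mul1r; apply: ler_wpM2r; lra.
  case: (leP (1 - m) gamma) => hg.
    have eG' : G = gamma by rewrite eG max_r.
    rewrite ep' eG'; lra.
  have eG' : G = 1 - m by rewrite eG max_l // ltW.
  have hmu : 0 <= (1 - m) * u by apply: mulr_ge0; lra.
  rewrite ep' eG'.
  have -> : 1 - (1 - m) + (1 - m) * u = m + (1 - m) * u by ring.
  lra.
have ep' : p = G * u by rewrite ep (negbTE hy) mulr0 add0r.
have h2 := hmw.2 hy.
have hq1 : q <= (1 - u) * u.
  apply: hq; rewrite ep'; apply: (le_trans hE).
  have -> : (1 - u) * u * (G * u) = G * (1 - u) * u ^+ 2 by ring.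
  apply: ler_wpM2r => //; apply: ler_wpM2r; lra.
have hGu : (1 - m) * u <= G * u by apply: ler_wpM2r; [apply: ltW | done].
have hmu : 0 <= m * (1 - u) by apply: mulr_ge0; lra.
have e1 : (1 - u) * u = u - u ^+ 2 by ring.
  rewrite e1 in hq1.
have g1u : 0 <= gamma * (1 - u) by apply: mulr_ge0; lra.
rewrite ep'; nra.
Qed.
End Round.


Section Main.
Variables (R : realType) (K d : nat) (X gamma D : R).
Notation M := 'M[R]_(K, d).
Hypothesis K2 : (2 <= K)%N.
Hypothesis X0 : 0 < X.
Hypothesis D0 : 0 < D.
Hypothesis g0 : 0 < gamma.
Hypothesis g1 : gamma <= 1.
Variable env : seq 'I_K -> 'I_K * 'rV[R]_d.
Variable ysel : seq 'I_K -> M -> 'rV[R]_d -> 'I_K.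
Variable ksel : seq 'I_K -> M -> 'rV[R]_d -> 'I_K -> 'I_K.
Variable upd : M -> M -> M.
Hypothesis hx : forall h, vnorm (env h).2 <= X.
Hypothesis hys : ystar_ok ysel.
Hypothesis hks : ktilde_ok ksel.
Let beta := betaK R K.
Let eta := gamma * (1 - beta) / (K%:R ^+ 2 * X ^+ 2).
Hypothesis hupd : upd_ok eta D upd.
Variable U : M.
Hypothesis hU : frob_dot U U <= D ^+ 2.

Let Wo := Wof beta gamma env ysel ksel upd.
Definition Phi (V : M) := frob_dot (V - U) (V - U) / (2 * eta).
Definition fZ h y' := Zf X gamma ysel ksel h (Wo h) (env h).2 (env h).1 y'.

Lemma eta_gt0 : 0 < eta.
Proof.
have k2 : 2 <= K%:R :> R by rewrite (ler_nat R 2 K).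
have b1 : beta < 1.
  have k1 : 1 < K%:R :> R by rewrite ltr1n.
  by rewrite /beta /betaK invf_lt1 // (lt_trans ltr01 k1).
apply: divr_gt0; first by apply: mulr_gt0 => //; rewrite subr_gt0.
by apply: mulr_gt0; apply: exprn_gt0 => //; apply: lt_le_trans k2.
Qed.

Lemma Wo_rcons h y' :
  Wo (rcons h y') = upd (Wo h) (grad beta gamma ysel ksel h (Wo h) (env h).2 (env h).1 y').
Proof. by rewrite /Wo /Wof rev_rcons /= revK. Qed.

Lemma step h y' :
  (y' != (env h).1)%:R - loss beta gamma ysel h (Wo h) (env h).2 (env h).1 y' U
  <= fZ h y' + (Phi (Wo h) - Phi (Wo (rcons h y'))).
Proof.
have K0 : (0 < K)%N by apply: leq_trans K2.
have hl := loss_sub beta ysel hks K0 (ltW g0) g1 h (Wo h) (env h).2 (env h).1 y' U.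
set g := grad beta gamma ysel ksel h (Wo h) (env h).2 (env h).1 y' in hl *.
have ho := ogd_step (Wo h) g eta_gt0 (ltW D0) hupd hU.
rewrite Wo_rcons -/g /Phi /fZ /Zf -/g.
move: hl; rewrite dotBr => hl.
move: ho; rewrite dotBr => ho.
rewrite -/beta -/eta -mulrBl; lra.
Qed.

Lemma Phi_ge0 V : 0 <= Phi V.
Proof. by apply: divr_ge0; [apply: dot_ge0 | apply: mulr_ge0 => //; apply: ltW eta_gt0]. Qed.

Lemma pointwise n (s : n.-tuple 'I_K) :
  mistakes env s <= cumloss beta gamma env ysel ksel upd U s + Phi 0 + Sf fZ s.
Proof.
set F := fun t : nat => Phi (Wo (take t s)).
have tel : \sum_(t < n) (F t - F t.+1) = F 0%N - F n.
  rewrite -(big_mkord (fun _ => true) (fun t => F t - F t.+1)) (eq_bigr (fun k => - (F k.+1 - F k))); last by move=> k _; rewrite opprB.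
  by rewrite sumrN telescope_sumr // opprB.
have F0 : F 0%N = Phi 0 by rewrite /F take0.
have Fn : 0 <= F n by apply: Phi_ge0.
have key : mistakes env s - cumloss beta gamma env ysel ksel upd U s
           <= Sf fZ s + \sum_(t < n) (F t - F t.+1).
  rewrite /mistakes /cumloss /Sf -sumrB -big_split; apply: ler_sum => t _.
  have e : take t.+1 s = rcons (take t s) (tnth s t).
    by rewrite (take_nth (tnth s t)) ?size_tuple // -tnth_nth.
  rewrite /F e; exact: step.
rewrite tel F0 in key; lra.
Qed.

Lemma expect_bound n :
  expect beta gamma env ysel ksel upd (@mistakes R K d env n)
  <= expect beta gamma env ysel ksel upd (cumloss beta gamma env ysel ksel upd (T:=n) U)
     + Phi 0 + n%:R * (gamma * (1 - beta)).
Proof.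
have K0 : (0 < K)%N by apply: leq_trans K2.
have hb := Sf_bound (beta:=beta) (env:=env) (ysel:=ysel) (ksel:=ksel) (upd:=upd) (f := fZ) (c := gamma * (1 - beta)) K0 (ltW g0) g1 n.
have hr : forall h, \sum_y pr beta gamma env ysel ksel upd h y * fZ h y <= gamma * (1 - beta).
  by move=> h; exact: (round K2 X0 g0 g1 hys hks h (Wo h) (env h).1 (hx h)).
have hb2 := hb hr.
rewrite /expect.
have h1 : \sum_(s : n.-tuple 'I_K) traj_prob beta gamma env ysel ksel upd s * mistakes env s
   <= \sum_(s : n.-tuple 'I_K) TP beta gamma env ysel ksel upd s *
   (cumloss beta gamma env ysel ksel upd U s + Phi 0 + Sf fZ s).
  apply: ler_sum => s _; apply: ler_wpM2l; first exact: (TP_ge0 beta env ysel ksel upd K0 (ltW g0) g1 s).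
  exact: pointwise.
apply: (le_trans h1).
rewrite (eq_bigr (fun s => TP beta gamma env ysel ksel upd s * cumloss beta gamma env ysel ksel upd U s
   + Phi 0 * TP beta gamma env ysel ksel upd s + TP beta gamma env ysel ksel upd s * Sf fZ s)); last first.
  by move=> s _; rewrite !mulrDr [Phi 0 * _]mulrC.
rewrite !big_split /= -mulr_sumr TP_sum // mulr1.
by rewrite lerD2l.
Qed.
End Main.


Lemma gamma_bounds (R : realType) (K T : nat) (X D : R) :
  (2 <= K)%N -> (1 <= T)%N -> 0 < X -> 0 < D ->
  0 < gammaT K T X D /\ gammaT K T X D <= 1.
Proof.
move=> K2 T1 X0 D0.
have k2 : 2 <= K%:R :> R by rewrite (ler_nat R 2 K).
have t1 : 1 <= T%:R :> R by rewrite (ler_nat R 1 T).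
have k0 : 0 < K%:R :> R by apply: lt_le_trans k2.
have b1 : 0 < 1 - betaK R K.
  rewrite subr_gt0 /betaK invf_lt1 //; apply: lt_le_trans k2; by rewrite ltr1n.
split; last by rewrite /gammaT ge_min lexx.
rewrite /gammaT lt_min ltr01 /= sqrtr_gt0.
apply: divr_gt0; first by apply: mulr_gt0; [apply: mulr_gt0; [apply: exprn_gt0|] | apply: exprn_gt0]; try apply: exprn_gt0.
apply: mulr_gt0; last by apply: lt_le_trans t1.
apply: mulr_gt0; last by rewrite subr_gt0; apply: lt_le_trans k2; rewrite ltr1n.
by apply: mulr_gt0.
Qed.

Lemma final_arith (R : realType) (K T : nat) (X D : R) :
  (2 <= K)%N -> (1 <= T)%N -> 0 < X -> 0 < D ->
  D ^+ 2 / (2 * etaT K T X D) + T%:R * (gammaT K T X D * (1 - betaK R K))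
  <= Num.max (K%:R ^+ 3 * X ^+ 2 * D ^+ 2 / (K%:R - 1))
             (2 * K%:R * X * D * Num.sqrt (T%:R / 2)).
Proof.
move=> K2 T1 X0 D0.
have [g0 g1] := gamma_bounds K2 T1 X0 D0.
rewrite /etaT.
set g := gammaT K T X D in g0 g1 *.
set k := K%:R. set t := T%:R.
have k2 : 2 <= k by rewrite /k (ler_nat R 2 K).
have t1 : 1 <= t by rewrite /t (ler_nat R 1 T).
have k0 : k != 0 by rewrite gt_eqF // (lt_le_trans _ k2).
have k10 : k - 1 != 0 by rewrite gt_eqF // subr_gt0 (lt_le_trans _ k2) // ltr1n.
have t0 : t != 0 by rewrite gt_eqF // (lt_le_trans _ t1).
have eb : betaK R K = k^-1 by [].
rewrite eb.
set A := k ^+ 3 * X ^+ 2 * D ^+ 2 / (k - 1).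
have eL : D ^+ 2 / (2 * (g * (1 - k^-1) / (k ^+ 2 * X ^+ 2))) + t * (g * (1 - k^-1))
          = A / (2 * g) + t * g * (k - 1) / k.
  by rewrite /A; field; rewrite k0 k10 gt_eqF //= gt_eqF.
rewrite eL.
have eg : g = Num.min 1 (Num.sqrt (k ^+ 4 * X ^+ 2 * D ^+ 2 / (2 * (k - 1) ^+ 2 * t))).
  rewrite /g /gammaT eb -/k -/t; congr (Num.min 1 (Num.sqrt _)); field.
  by rewrite k0 k10 t0.
set S := k ^+ 4 * X ^+ 2 * D ^+ 2 / (2 * (k - 1) ^+ 2 * t) in eg.
have kk : 0 < k * (k - 1) by apply: mulr_gt0; [apply: lt_le_trans k2 | lra].
have S0 : 0 <= S.
  have kp : 0 < k by apply: lt_le_trans k2.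
  have n1 : 0 <= k ^+ 4 * X ^+ 2 * D ^+ 2.
    by apply: mulr_ge0; [apply: mulr_ge0|]; apply: exprn_ge0; apply: ltW.
  have n2 : 0 <= 2 * (k - 1) ^+ 2 * t.
    by apply: mulr_ge0; [apply: mulr_ge0; [lra | apply: sqr_ge0] | lra].
  exact: divr_ge0 n1 n2.
have hA : A / (2 * S) = t * (k - 1) / k.
  rewrite /A /S; field; rewrite k0 k10 t0 !gt_eqF //=.
have kp : 0 < k by apply: lt_le_trans k2.
have A0 : 0 <= A.
  apply: divr_ge0; last lra.
  by apply: mulr_ge0; [apply: mulr_ge0|]; apply: exprn_ge0; apply: ltW.
have wS := sqr_sqrtr S0.
set w := Num.sqrt S in eg wS.
have w0 : 0 <= w by apply: sqrtr_ge0.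
case: (leP 1 w) => hw.
  have eg1 : g = 1 by rewrite eg min_l.
  rewrite eg1 le_max; apply/orP; left.
  have S1 : 1 <= S by rewrite -wS; nra.
  have h2 : t * (k - 1) / k <= A / 2.
    rewrite -hA ler_pdivrMr; last lra.
    have : 0 <= A * (S - 1) by apply: mulr_ge0; lra.
    have -> : A / 2 * (2 * S) = A * S by field.
    lra.
  have -> : t * 1 * (k - 1) / k = t * (k - 1) / k by rewrite mulr1.
  have -> : A / (2 * 1) = A / 2 by rewrite mulr1.
  lra.
have egw : g = w by rewrite eg min_r // ltW.
rewrite egw; rewrite egw in g0.
rewrite le_max; apply/orP; right.
have e1 : A / (2 * w) = t * (k - 1) / k * w.
  rewrite -hA -wS; field; rewrite gt_eqF //.
rewrite e1.
set v := Num.sqrt (t / 2).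
have v0 : 0 <= v by apply: sqrtr_ge0.
have vS : v ^+ 2 = t / 2 by rewrite sqr_sqrtr // divr_ge0 //; lra.
have eq1 : (t * (k - 1) / k * w + t * w * (k - 1) / k) ^+ 2 = 2 * t * k ^+ 2 * X ^+ 2 * D ^+ 2.
  have -> : (t * (k - 1) / k * w + t * w * (k - 1) / k) ^+ 2 = 4 * t ^+ 2 * (k - 1) ^+ 2 / k ^+ 2 * w ^+ 2.
    by field.
  rewrite wS /S; field; rewrite k0 k10 t0.
  by [].
have eq2 : (2 * k * X * D * v) ^+ 2 = 2 * t * k ^+ 2 * X ^+ 2 * D ^+ 2.
  by rewrite !exprMn vS; field.
have l0 : 0 <= t * (k - 1) / k * w + t * w * (k - 1) / k.
  have : 0 <= t * (k - 1) / k * w.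
    apply: mulr_ge0 => //; apply: divr_ge0; [apply: mulr_ge0; lra | lra].
  lra.
have r0 : 0 <= 2 * k * X * D * v.
  by apply: mulr_ge0 => //; apply: mulr_ge0; [apply: mulr_ge0; [apply: mulr_ge0; lra|lra]|lra].
move: (t * (k - 1) / k * w + t * w * (k - 1) / k) l0 eq1 => a l0 eq1.
by rewrite -ler_sqr ?nnegrE // eq1 eq2.
Qed.


Unset Implicit Arguments. Set Strict Implicit.

Theorem theorem5 (R : realType) (K d T : nat) (X D : R)
  (env : seq 'I_K -> 'I_K * 'rV[R]_d)
  (ysel : seq 'I_K -> 'M[R]_(K, d) -> 'rV[R]_d -> 'I_K)
  (ksel : seq 'I_K -> 'M[R]_(K, d) -> 'rV[R]_d -> 'I_K -> 'I_K)
  (upd : 'M[R]_(K, d) -> 'M[R]_(K, d) -> 'M[R]_(K, d)) :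
  (2 <= K)%N -> (1 <= d)%N -> (1 <= T)%N -> 0 < X -> 0 < D ->
  (forall h, vnorm (env h).2 <= X) ->
  ystar_ok ysel -> ktilde_ok ksel ->
  upd_ok (etaT K T X D) D upd ->
  forall U : 'M[R]_(K, d), frob_norm U <= D ->
  expect (betaK R K) (gammaT K T X D) env ysel ksel upd (@mistakes R K d env T)
  <= expect (betaK R K) (gammaT K T X D) env ysel ksel upd
       (@cumloss R K d (betaK R K) (gammaT K T X D) env ysel ksel upd T U)
     + Num.max (K%:R ^+ 3 * X ^+ 2 * D ^+ 2 / (K%:R - 1))
               (2 * K%:R * X * D * Num.sqrt (T%:R / 2)).
Proof.
move=> K2 d1 T1 X0 D0 hx hys hks hupd U hU.
have [g0 g1] := gamma_bounds K2 T1 X0 D0.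
have hU2 : frob_dot U U <= D ^+ 2 by rewrite -frob_le // ltW.
have hb := expect_bound K2 X0 D0 g0 g1 hx hys hks hupd hU2 T.
have hfa := final_arith K2 T1 X0 D0.
have eta0 : 0 < etaT K T X D by exact: (eta_gt0 K2 X0 g0).
have hP : Phi X (gammaT K T X D) U 0 <= D ^+ 2 / (2 * etaT K T X D).
  rewrite /Phi sub0r dotNl dotNr opprK.
  rewrite ler_pM2r //; rewrite invr_gt0 mulr_gt0 //.
lra.
Qed.
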